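(* Let $\mathcal{H}$ be a complex Hilbert space and $B,C\in\mathcal{B}(\mathcal{H})$. Then $$w\left(\begin{bmatrix}0 & B\\ C & 0\end{bmatrix}\right)\ge \frac12\max\{\|B\|,\|C\|\}+\frac14\Big|\,\|B+C^*\|-\|B-C^*\|\,\Big|.$$
   Context: $\mathcal{B}(\mathcal{H})$ is the algebra of bounded linear operators on $\mathcal{H}$ with operator norm $\|\cdot\|$; $A^*$ is the adjoint; $w(A)=\sup_{\|x\|=1}|\langle Ax,x\rangle|$ is the numerical radius. The operator matrix $\begin{bmatrix}A&B\\C&D\end{bmatrix}$ acts on $\mathcal{H}\oplus\mathcal{H}$ by $(x_1,x_2)\mapsto(Ax_1+Bx_2,\,Cx_1+Dx_2)$; $0$ denotes the zero operator. *)

(* Defs.v *)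
From HB Require Import structures.
From mathcomp Require Import all_boot all_order all_algebra.
From mathcomp Require Import all_classical reals.
From mathcomp Require Import complex.
Set Implicit Arguments. Unset Strict Implicit. Unset Printing Implicit Defensive.
Import Order.TTheory GRing.Theory Num.Theory.
Local Open Scope ring_scope.
Local Open Scope classical_set_scope.

Record is_inner_product (R : realType) (H : lmodType R[i]) (ip : H -> H -> R[i])
  : Prop := IsInnerProduct {
  ip_linear_l : forall (a : R[i]) (x y z : H), ip (a *: x + y) z = a * ip x z + ip y z;
  ip_conj_sym : forall x y : H, ip y x = conjc (ip x y);
  ip_nonneg : forall x : H, 0 <= ip x x;
  ip_definite : forall x : H, ip x x = 0 -> x = 0 }.

Definition ipnorm (R : realType) (H : lmodType R[i]) (ip : H -> H -> R[i]) (x : H) : R :=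
  Num.sqrt (@complex.Re R (ip x x)).

Definition ip_complete (R : realType) (H : lmodType R[i]) (ip : H -> H -> R[i]) : Prop :=
  forall u : nat -> H,
    (forall e : R, 0 < e -> exists N : nat, forall m n : nat, (N <= m)%N -> (N <= n)%N ->
        ipnorm ip (u m - u n) < e) ->
    exists l : H, forall e : R, 0 < e -> exists N : nat, forall n : nat, (N <= n)%N ->
        ipnorm ip (u n - l) < e.

Definition is_hilbert (R : realType) (H : lmodType R[i]) (ip : H -> H -> R[i]) : Prop :=
  is_inner_product ip /\ ip_complete ip.

Definition bounded_op (R : realType) (H : lmodType R[i]) (ip : H -> H -> R[i])
  (T : H -> H) : Prop :=
  (forall (a : R[i]) (x y : H), T (a *: x + y) = a *: T x + T y) /\
  exists M : R, forall x : H, ipnorm ip (T x) <= M * ipnorm ip x.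

Definition opnorm (R : realType) (H : lmodType R[i]) (ip : H -> H -> R[i])
  (T : H -> H) : R :=
  sup [set ipnorm ip (T x) | x in [set x : H | ipnorm ip x <= 1]].

Definition numrad (R : realType) (H : lmodType R[i]) (ip : H -> H -> R[i])
  (T : H -> H) : R :=
  sup [set ComplexField.Normc.normc (ip (T x) x) | x in [set x : H | ipnorm ip x = 1]].

Definition is_adjoint (R : realType) (H : lmodType R[i]) (ip : H -> H -> R[i])
  (T S : H -> H) : Prop :=
  forall x y : H, ip (T x) y = ip x (S y).

Definition ip_sum (R : realType) (H : lmodType R[i]) (ip : H -> H -> R[i])
  (p q : H * H) : R[i] :=
  ip p.1 q.1 + ip p.2 q.2.

Definition opmatrix (R : realType) (H : lmodType R[i]) (A B C D : H -> H)
  (p : H * H) : H * H :=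
  (A p.1 + B p.2, C p.1 + D p.2).

Definition zero_op (R : realType) (H : lmodType R[i]) : H -> H := fun _ => 0.

(* Main.v *)
Require Import Defs.
From HB Require Import structures.
From mathcomp Require Import all_boot all_order all_algebra.
From mathcomp Require Import all_classical reals.
From mathcomp Require Import complex.
From mathcomp Require Import ring lra.
Import Order.TTheory GRing.Theory Num.Theory.
Local Open Scope ring_scope.
Local Open Scope complex_scope.

Lemma ReM_real (R : realType) (z : R[i]) k : complex.Re (k%:C * z) = k * complex.Re z.
Proof. by case: z => a b /=; ring. Qed.
Lemma ReJ (R : realType) (z : R[i]) : complex.Re (conjc z) = complex.Re z.
Proof. by case: z. Qed.
Lemma ReD (R : realType) (z w : R[i]) : complex.Re (z + w) = complex.Re z + complex.Re w.
Proof. by case: z; case: w. Qed.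
Lemma ImD (R : realType) (z w : R[i]) : complex.Im (z + w) = complex.Im z + complex.Im w.
Proof. by case: z; case: w. Qed.
Lemma conjc_real' (R : realType) (k : R) : conjc (k%:C) = k%:C.
Proof. by rewrite /= oppr0. Qed.
Lemma Re_le_normc (R : realType) (z : R[i]) : complex.Re z <= ComplexField.Normc.normc z.
Proof.
case: z => a b /=. apply: (le_trans (ler_norm a)).
by rewrite -sqrtr_sqr ler_sqrt ?addr_ge0 ?sqr_ge0 // lerDl sqr_ge0.
Qed.
Lemma Im_le_normc (R : realType) (z : R[i]) : complex.Im z <= ComplexField.Normc.normc z.
Proof.
case: z => a b /=. apply: (le_trans (ler_norm b)).
by rewrite -sqrtr_sqr ler_sqrt ?addr_ge0 ?sqr_ge0 // lerDr sqr_ge0.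
Qed.
Lemma normc_le (R : realType) (z : R[i]) :
  ComplexField.Normc.normc z <= `|complex.Re z| + `|complex.Im z|.
Proof.
case: z => a b /=.
have h : `|a| + `|b| = Num.sqrt ((`|a| + `|b|) ^+ 2).
  by rewrite sqrtr_sqr (ger0_norm (addr_ge0 (normr_ge0 a) (normr_ge0 b))).
rewrite [X in _ <= X]h ler_sqrt ?sqr_ge0 //.
have ha := real_normK (num_real a). have hb := real_normK (num_real b).
have := normr_ge0 a; have := normr_ge0 b. nra.
Qed.

Definition mi (R : realType) : R[i] := (0 +i* -1)%C.
Lemma mi_conj (R : realType) : mi R * conjc (mi R) = 1.
Proof. apply/eqP; rewrite eq_complex /=. apply/andP; split; apply/eqP; ring. Qed.
Lemma Re_mi (R : realType) (z : R[i]) : complex.Re (mi R * z) = complex.Im z.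
Proof. case: z => a b /=; ring. Qed.

Definition pi_ (R : realType) : R[i] := (0 +i* 1)%C.
Lemma pi_conj (R : realType) : pi_ R * conjc (pi_ R) = 1.
Proof. apply/eqP; rewrite eq_complex /=. apply/andP; split; apply/eqP; ring. Qed.
Lemma Im_pi (R : realType) (z : R[i]) : complex.Im (pi_ R * z) = complex.Re z.
Proof. case: z => a b /=; ring. Qed.
Lemma Im_cpi (R : realType) (z : R[i]) : complex.Im (conjc (pi_ R) * z) = - complex.Re z.
Proof. case: z => a b /=; ring. Qed.
Lemma normc_ge0 (R : realType) (z : R[i]) : 0 <= ComplexField.Normc.normc z.
Proof. by case: z => a b; apply: sqrtr_ge0. Qed.

Lemma aux_field (R : realType) (r n : R) : n != 0 -> r != 0 ->
  (r * n)^-1 * ((r * n)^-1 * n ^+ 2) = (r ^+ 2)^-1.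
Proof. by move=> nn rn; field; rewrite nn rn. Qed.

Section IP.
Variables (R : realType) (H : lmodType R[i]) (ip : H -> H -> R[i]).
Hypothesis hip : is_inner_product ip.
Local Notation rip u v := (complex.Re (ip u v)).
Local Notation N := (ipnorm ip).

Lemma ip0l z : ip 0 z = 0.
Proof.
have := ip_linear_l hip 1 0 0 z. rewrite scaler0 addr0 mul1r => h.
by apply/eqP; rewrite -(addrI _ (esym (etrans (addr0 _) h))).
Qed.
Lemma ipDl x y z : ip (x + y) z = ip x z + ip y z.
Proof. by have := ip_linear_l hip 1 x y z; rewrite scale1r mul1r. Qed.
Lemma ipZl a x z : ip (a *: x) z = a * ip x z.
Proof. by rewrite -[a *: x]addr0 ip_linear_l // ip0l addr0. Qed.
Lemma ipDr x y z : ip z (x + y) = ip z x + ip z y.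
Proof. by rewrite !(ip_conj_sym hip _ z) ipDl rmorphD. Qed.
Lemma ipZr a x z : ip z (a *: x) = conjc a * ip z x.
Proof. by rewrite !(ip_conj_sym hip _ z) ipZl rmorphM. Qed.
Lemma ip0r z : ip z 0 = 0.
Proof. by rewrite ip_conj_sym // ip0l /= oppr0. Qed.

Lemma ripC u v : rip u v = rip v u.
Proof. by rewrite (ip_conj_sym hip u v) ReJ. Qed.
Lemma ripDl x y z : rip (x + y) z = rip x z + rip y z.
Proof. by rewrite ipDl ReD. Qed.
Lemma ripDr x y z : rip z (x + y) = rip z x + rip z y.
Proof. by rewrite ipDr ReD. Qed.
Lemma ripZl k x z : rip (k%:C *: x) z = k * rip x z.
Proof. by rewrite ipZl ReM_real. Qed.
Lemma ripZr k x z : rip z (k%:C *: x) = k * rip z x.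
Proof. by rewrite ipZr conjc_real' ReM_real. Qed.
Lemma ripNl x z : rip (- x) z = - rip x z.
Proof. by rewrite -scaleN1r -[-1 : R[i]](rmorphN1 (real_complex R)) ripZl mulN1r. Qed.
Lemma ripNr x z : rip z (- x) = - rip z x.
Proof. by rewrite ripC ripNl ripC. Qed.

Lemma ipxx x : ip x x = (rip x x)%:C.
Proof.
have h := ip_nonneg hip x. have := ger0_Im h.
by case: (ip x x) => a b /= ->.
Qed.
Lemma rip_ge0 x : 0 <= rip x x.
Proof. by have := ip_nonneg hip x; rewrite ipxx lecR. Qed.
Lemma N_ge0 x : 0 <= N x.
Proof. exact: sqrtr_ge0. Qed.
Lemma N_sq x : N x ^+ 2 = rip x x.
Proof. by rewrite /ipnorm sqr_sqrtr // rip_ge0. Qed.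
Lemma rip0_eq0 x : rip x x = 0 -> x = 0.
Proof. by move=> h; apply: (ip_definite hip); rewrite ipxx h. Qed.
Lemma N0_eq0 x : N x = 0 -> x = 0.
Proof. by move=> h; apply: rip0_eq0; rewrite -N_sq h expr0n. Qed.
Lemma N0 : N 0 = 0.
Proof. by rewrite /ipnorm ip0l sqrtr0. Qed.


Lemma rip_expand s t u v :
  rip (s%:C *: u + t%:C *: v) (s%:C *: u + t%:C *: v) =
  s ^+ 2 * rip u u + 2 * s * t * rip u v + t ^+ 2 * rip v v.
Proof. rewrite ripDl !ripDr !ripZl !ripZr (ripC v u); ring. Qed.

Lemma CS u v : `|rip u v| <= N u * N v.
Proof.
have [u0|] := eqVneq (N u) 0.
  by rewrite (N0_eq0 _ u0) ip0l normr0 mulr_ge0 // N_ge0.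
have [v0|] := eqVneq (N v) 0.
  by rewrite (N0_eq0 _ v0) ip0r normr0 mulr_ge0 // N_ge0.
move=> nv nu.
have pu : 0 < N u by rewrite lt_def nu N_ge0.
have pv : 0 < N v by rewrite lt_def nv N_ge0.
have h1 := rip_ge0 ((N v)%:C *: u + (- N u)%:C *: v).
have h2 := rip_ge0 ((N v)%:C *: u + (N u)%:C *: v).
rewrite rip_expand -(N_sq u) -(N_sq v) in h1.
rewrite rip_expand -(N_sq u) -(N_sq v) in h2.
have pab : 0 < N u * N v by apply: mulr_gt0.
rewrite ler_norml; apply/andP; split; nra.
Qed.


Lemma N_scale k x : N (k%:C *: x) = `|k| * N x.
Proof.
by rewrite /ipnorm ripZl ripZr mulrA -expr2 sqrtrM ?sqr_ge0 // sqrtr_sqr.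
Qed.
Lemma N_opp x : N (- x) = N x.
Proof.
by rewrite -scaleN1r -[-1 : R[i]](rmorphN1 (real_complex R)) N_scale normrN normr1 mul1r.
Qed.
Lemma N_tri u v : N (u + v) <= N u + N v.
Proof.
have e : N (u + v) ^+ 2 = N u ^+ 2 + 2 * rip u v + N v ^+ 2.
  by rewrite !N_sq ripDl !ripDr (ripC v u); ring.
have := CS u v; have := ler_norm (rip u v).
have := N_ge0 u; have := N_ge0 v; have := N_ge0 (u + v). nra.
Qed.
Lemma N_sub u v : N (u - v) <= N u + N v.
Proof. by rewrite -(N_opp v) N_tri. Qed.
Lemma N_mi x : N (mi R *: x) = N x.
Proof. by rewrite /ipnorm ipZl ipZr mulrA mi_conj mul1r. Qed.
Lemma CS_Im u v : `|complex.Im (ip u v)| <= N u * N v.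
Proof. by rewrite -Re_mi -ipZl -(N_mi u) CS. Qed.
Lemma normc_ip u v : ComplexField.Normc.normc (ip u v) <= 2 * (N u * N v).
Proof.
apply: (le_trans (normc_le _ _)). rewrite mulr2n mulrDl !mul1r.
by apply: lerD; [apply: CS | apply: CS_Im].
Qed.

Definition lin (T : H -> H) := forall a x y, T (a *: x + y) = a *: T x + T y.
Definition bnd (T : H -> H) := exists K, forall x, N x <= 1 -> N (T x) <= K.

Lemma lin0 T : lin T -> T 0 = 0.
Proof.
move=> hT; have := hT 1 0 0; rewrite scaler0 addr0 scale1r => h.
by apply: (addrI (T 0)); rewrite -h addr0.
Qed.
Lemma linZ T a x : lin T -> T (a *: x) = a *: T x.
Proof. by move=> hT; rewrite -[a *: x]addr0 hT lin0 // addr0. Qed.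
Lemma linD T x y : lin T -> T (x + y) = T x + T y.
Proof. by move=> hT; have := hT 1 x y; rewrite !scale1r. Qed.
Lemma linN T x : lin T -> T (- x) = - T x.
Proof. by move=> hT; rewrite -scaleN1r linZ // scaleN1r. Qed.

Lemma bounded_bnd T : bounded_op ip T -> lin T /\ bnd T.
Proof.
case=> hl [M hM]; split => //; exists `|M| => x hx.
have := hM x; have := N_ge0 x; have := ler_norm M; have := normr_ge0 M. nra.
Qed.

Lemma opnorm_ub T x : bnd T -> N x <= 1 -> N (T x) <= opnorm ip T.
Proof.
case=> K hK hx; rewrite /opnorm; apply: ub_le_sup; last by exists x.
by exists K => _ [y hy <-]; apply: hK.
Qed.
Lemma opnorm_le T K : (forall x, N x <= 1 -> N (T x) <= K) -> opnorm ip T <= K.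
Proof.
move=> hK; rewrite /opnorm; apply: ge_sup.
  by exists (N (T 0)), 0 => //=; rewrite N0 ler01.
by move=> _ [y hy <-]; apply: hK.
Qed.
Lemma opnorm_ge0 T : bnd T -> 0 <= opnorm ip T.
Proof. by move=> hb; apply: le_trans (N_ge0 (T 0)) (opnorm_ub _ _ hb _); rewrite N0 ler01. Qed.
Lemma opnorm_scale T x : lin T -> bnd T -> N (T x) <= opnorm ip T * N x.
Proof.
move=> hl hb; have [x0|nx] := eqVneq (N x) 0.
  by rewrite (N0_eq0 _ x0) (lin0 _ hl) N0 mulr0.
have px : 0 < N x by rewrite lt_def nx N_ge0.
set k := (N x)^-1.
have hk : N (k%:C *: x) = 1.
  by rewrite N_scale ger0_norm ?invr_ge0 ?N_ge0 // mulVf.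
have h1 : N (k%:C *: x) <= 1 by rewrite hk.
have := opnorm_ub _ _ hb h1; rewrite linZ // N_scale ger0_norm ?invr_ge0 ?N_ge0 // => h.
have hkx : k * N x = 1 by rewrite mulVf.
have := ler_wpM2l (ltW px) h.
by rewrite mulrA (mulrC (N x) k) hkx mul1r mulrC.
Qed.

Lemma ip_ext u v : (forall z, ip z u = ip z v) -> u = v.
Proof.
move=> h; apply/eqP; rewrite -subr_eq0; apply/eqP; apply: (ip_definite hip).
by rewrite -scaleN1r ipDr ipZr h rmorphN1 mulN1r subrr.
Qed.

Lemma adj_lin C Cs : lin C -> is_adjoint ip C Cs -> lin Cs.
Proof.
move=> hl ha a x y; apply: ip_ext => z.
by rewrite -ha ipDr ipZr !ha ipDr ipZr.
Qed.

Lemma adj_bnd C Cs : lin C -> bnd C -> is_adjoint ip C Cs -> bnd Cs.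
Proof.
move=> hl hb ha; exists (opnorm ip C) => y hy.
have e : N (Cs y) ^+ 2 = rip (C (Cs y)) y by rewrite N_sq ha.
have h1 := CS (C (Cs y)) y.
have h2 := opnorm_scale _ (Cs y) hl hb.
have h0 := opnorm_ge0 _ hb.
have := ler_norm (rip (C (Cs y)) y).
have := N_ge0 (Cs y); have := N_ge0 y; have := N_ge0 (C (Cs y)). nra.
Qed.

Lemma lin_add T S : lin T -> lin S -> lin (T \+ S).
Proof. by move=> hT hS a x y /=; rewrite hT hS scalerDr addrACA. Qed.
Lemma lin_sub T S : lin T -> lin S -> lin (T \- S).
Proof. by move=> hT hS a x y /=; rewrite hT hS scalerBr opprD addrACA. Qed.
Lemma bnd_add T S : bnd T -> bnd S -> bnd (T \+ S).
Proof.
case=> K1 h1 [K2 h2]; exists (K1 + K2) => x hx /=.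
by apply: le_trans (N_tri _ _) _; apply: lerD; [apply: h1 | apply: h2].
Qed.
Lemma bnd_sub T S : bnd T -> bnd S -> bnd (T \- S).
Proof.
case=> K1 h1 [K2 h2]; exists (K1 + K2) => x hx /=.
by apply: le_trans (N_sub _ _) _; apply: lerD; [apply: h1 | apply: h2].
Qed.


Lemma N_double v : N (v + v) = 2 * N v.
Proof.
rewrite -mulr2n -scaler_nat -(rmorph_nat (real_complex R)) N_scale.
by rewrite normr_nat.
Qed.

Lemma sum_norm1 p : ipnorm (ip_sum ip) p = 1 -> rip p.1 p.1 + rip p.2 p.2 = 1.
Proof.
rewrite /ipnorm /ip_sum ReD => h.
have := sqr_sqrtr (addr_ge0 (rip_ge0 p.1) (rip_ge0 p.2)).
by rewrite h expr1n => <-.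
Qed.
Lemma norm1_sum x y : rip x x + rip y y = 1 -> ipnorm (ip_sum ip) (x, y) = 1.
Proof. by rewrite /ipnorm /ip_sum /= ReD => ->; rewrite sqrtr1. Qed.
Lemma N_le1 x y : rip x x + rip y y = 1 -> N x <= 1.
Proof.
move=> h; have := N_sq x; have := N_sq y; have := rip_ge0 y; have := N_ge0 x. nra.
Qed.

Variables (B C Cs : H -> H).
Hypotheses (lB : lin B) (bB : bnd B) (lC : lin C) (bC : bnd C)
  (ha : is_adjoint ip C Cs).
Local Notation W := (numrad (ip_sum ip) (opmatrix (@zero_op R H) B C (@zero_op R H))).

Lemma W_ub x y : rip x x + rip y y = 1 ->
  ComplexField.Normc.normc (ip (B y) x + ip (C x) y) <= W.
Proof.
move=> h; rewrite /numrad; apply: ub_le_sup; last first.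
  by exists (x, y); [apply: norm1_sum | rewrite /ip_sum /opmatrix /zero_op /= addr0 add0r].
exists (2 * opnorm ip B + 2 * opnorm ip C) => _ [[u v] hp <-].
have h1 := sum_norm1 _ hp; rewrite /= in h1.
have hu := N_le1 _ _ h1.
have hv : N v <= 1 by apply: (N_le1 v u); rewrite addrC.
rewrite /ip_sum /opmatrix /zero_op /= addr0 add0r.
apply: le_trans (le_normcD _ _) _.
apply: lerD; apply: le_trans (normc_ip _ _) _; rewrite ler_pM2l ?ltr0n //.
  have := opnorm_ub _ _ bB hv; have := N_ge0 u; have := N_ge0 (B v). nra.
have := opnorm_ub _ _ bC hu; have := N_ge0 v; have := N_ge0 (C u). nra.
Qed.

Lemma W_ge0 : 0 <= W.
Proof.
case: (pselect (exists x y, rip x x + rip y y = 1)) => [[x [y h]]|nE].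
  exact: le_trans (normc_ge0 _ _) (W_ub _ _ h).
rewrite /numrad sup_out //; case=> [[_ [[x y] hp _]] _].
by apply: nE; exists x, y; apply: (sum_norm1 (x, y)).
Qed.

Lemma W_plus x y : rip x x + rip y y = 1 -> rip ((B \+ Cs) y) x <= W.
Proof.
move=> h; apply: le_trans (W_ub _ _ h); apply: le_trans (Re_le_normc _ _).
by rewrite /= ReD ripDl (ha x y) (ripC x).
Qed.

Lemma W_minus x y : rip x x + rip y y = 1 -> rip ((B \- Cs) y) x <= W.
Proof.
move=> h.
have h' : rip x x + rip (pi_ R *: y) (pi_ R *: y) = 1.
  by rewrite ipZl ipZr mulrA pi_conj mul1r.
apply: le_trans (W_ub _ _ h'); apply: le_trans (Im_le_normc _ _).
rewrite linZ // ipZl ipZr ImD Im_pi Im_cpi (ha x y) /= ripDl ripNl (ripC x).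
by [].
Qed.

Lemma lower D : lin D -> bnd D ->
  (forall x y, rip x x + rip y y = 1 -> rip (D y) x <= W) -> opnorm ip D <= 2 * W.
Proof.
move=> lD bD hD; apply: opnorm_le => y hy.
have W0 := W_ge0.
have [z0|nz] := eqVneq (N (D y)) 0.
  by rewrite z0; apply: mulr_ge0.
have [y0|ny] := eqVneq (N y) 0.
  by move: nz; rewrite (N0_eq0 _ y0) (lin0 _ lD) N0 eqxx.
set z := D y.
have pz : 0 < N z by rewrite lt_def nz N_ge0.
have py : 0 < N y by rewrite lt_def ny N_ge0.
set r := Num.sqrt (2 : R).
have r2 : r ^+ 2 = 2 by rewrite sqr_sqrtr // ler0n.
have pr : 0 < r by rewrite sqrtr_gt0 ltr0n.
set s := (r * N z)^-1. set t := (r * N y)^-1.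
have e1 : rip (s%:C *: z) (s%:C *: z) + rip (t%:C *: y) (t%:C *: y) = 1.
  rewrite !ripZl !ripZr -(N_sq z) -(N_sq y) /s /t.
  rewrite !aux_field ?gt_eqF // r2; lra.
have := hD _ _ e1.
rewrite linZ // ripZl ripZr -(N_sq z).
have -> : t * (s * N z ^+ 2) = (r ^+ 2 * N y)^-1 * N z.
  by rewrite /s /t; field; rewrite ny nz gt_eqF.
rewrite r2 => hv.
set v := (2 * N y)^-1 * N z in hv.
have ev : 2 * N y * v = N z by rewrite /v; field; rewrite ny.
nra.
Qed.
Lemma final : 2^-1 * Num.max (opnorm ip B) (opnorm ip C)
   + 4^-1 * `| opnorm ip (B \+ Cs) - opnorm ip (B \- Cs) | <= W.
Proof.
have lCs := adj_lin _ _ lC ha.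
have bCs := adj_bnd _ _ lC bC ha.
have lP := lin_add _ _ lB lCs. have bP := bnd_add _ _ bB bCs.
have lM := lin_sub _ _ lB lCs. have bM := bnd_sub _ _ bB bCs.
set a := opnorm ip (B \+ Cs). set b := opnorm ip (B \- Cs).
have ha2 : a <= 2 * W := lower _ lP bP W_plus.
have hb2 : b <= 2 * W := lower _ lM bM W_minus.
have a0 : 0 <= a := opnorm_ge0 _ bP.
have b0 : 0 <= b := opnorm_ge0 _ bM.
have hB : opnorm ip B <= 2^-1 * (a + b).
  apply: opnorm_le => x hx.
  have e : B x + B x = (B \+ Cs) x + (B \- Cs) x.
    by rewrite /= addrACA subrr addr0.
  have := N_tri ((B \+ Cs) x) ((B \- Cs) x).
  rewrite -e N_double.
  have := opnorm_ub _ _ bP hx; have := opnorm_ub _ _ bM hx.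
  rewrite -/a -/b. lra.
have hC : opnorm ip C <= 2^-1 * (a + b).
  apply: opnorm_le => x hx.
  set v := C x.
  have e1 : N v ^+ 2 = rip x (Cs v) by rewrite N_sq /v ha.
  have e : Cs v + Cs v = (B \+ Cs) v - (B \- Cs) v.
    by rewrite /= opprB [RHS]addrC addrA subrK.
  have h2 := N_sub ((B \+ Cs) v) ((B \- Cs) v).
  rewrite -e N_double in h2.
  have h3 := opnorm_scale _ v lP bP.
  have h4 := opnorm_scale _ v lM bM.
  rewrite -/a -/b in h3 h4.
  have h5 := CS x (Cs v). have h6 := ler_norm (rip x (Cs v)).
  have := N_ge0 x; have := N_ge0 v; have := N_ge0 (Cs v).
  nra.
have hm : Num.max (opnorm ip B) (opnorm ip C) <= 2^-1 * (a + b).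
  by rewrite ge_max hB hC.
have habs : `|a - b| <= 4 * W - a - b.
  by rewrite ler_norml; apply/andP; split; lra.
lra.
Qed.
End IP.

Theorem mainTheorem2 (R : realType) (H : lmodType R[i]) (ip : H -> H -> R[i])
  (B C Cstar : H -> H) :
  is_hilbert ip ->
  bounded_op ip B -> bounded_op ip C ->
  is_adjoint ip C Cstar ->
  numrad (ip_sum ip) (opmatrix (@zero_op R H) B C (@zero_op R H))
    >= 2^-1 * Num.max (opnorm ip B) (opnorm ip C)
       + 4^-1 * `| opnorm ip (B \+ Cstar) - opnorm ip (B \- Cstar) |.
Proof.
case=> hip _ hB hC ha.
have [lB bB] := bounded_bnd R H ip B hB.
have [lC bC] := bounded_bnd R H ip C hC.
by apply: final.
Qed.
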